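(* Let $P_n$ be a labeled path with ad-pattern $w=w_1\cdots w_{n-1}$. Suppose that at least one of the following holds: (i) $RT(P_n)$ contains a $(1,1,3)$ sub-ribbon, i.e. $w$ contains $ddaa$ as a factor (consecutive letters); (ii) $RT(P_n)$ begins with a $(1,3)$ sub-ribbon, i.e. $w$ begins with $daa$; (iii) $RT(P_n)$ ends with a $(1,1,2)$ sub-ribbon, i.e. $w$ ends with $dda$. Then $X(P_n;\mathbf{x},q)$ is not symmetric.
   Context: A labeled path $P_n$ is the path graph with vertices $v_1,\dots,v_n$ (edges $v_iv_{i+1}$) where $v_i$ carries label $\sigma_i$ for a permutation $\sigma$ of $[n]$; vertices are identified with labels. A proper coloring is $c\colon[n]\to\{1,2,\dots\}$ with adjacent vertices colored differently; $\operatorname{asc}(c)=\#\{ij\in E: i<j,\ c(i)<c(j)\}$. The CQF is $X(P_n;\mathbf{x},q)=\sum_{c \text{ proper}} x_{c(1)}\cdots x_{c(n)}q^{\operatorname{asc}(c)}$; it is symmetric if each coefficient of $q^k$ is a symmetric function. The ad-pattern of $P_n$ is $w_1\cdots w_{n-1}$ with $w_i=a$ if $\sigma_i<\sigma_{i+1}$ and $w_i=d$ otherwise. The ribbon diagram $RT(P_n)$: start with box $1$, and for $i=1,\dots,n-1$ place box $i+1$ immediately right of box $i$ if $w_i=a$ and immediately above box $i$ if $w_i=d$. A $\beta$ sub-ribbon is a set of consecutive boxes whose shape is the ribbon with row lengths $\beta$ (bottom to top); a $(1,1,3)$ shape is a vertical column of three boxes whose top box is the leftmost of a row of three boxes. 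*)

(* Defs.v *)
From mathcomp Require Import all_boot all_fingroup.
Set Implicit Arguments. Unset Strict Implicit. Unset Printing Implicit Defensive.

(* Labels are 0..n-1 (order-preserving shift of 1..n).  A labeled path is given
   by sigma : 'S_n ; vertex v_(i+1) carries label sigma i. *)

Definition path_labels n (sigma : 'S_n) : seq 'I_n := [seq sigma i | i <- enum 'I_n].

Definition path_edges n (sigma : 'S_n) : seq ('I_n * 'I_n) :=
  zip (path_labels sigma) (behead (path_labels sigma)).

Definition la : bool := true.
Definition ld : bool := false.
Definition ad_pattern n (sigma : 'S_n) : seq bool :=
  [seq (val p.1 < val p.2)%N | p <- path_edges sigma].

(* Colorings with colors 0..m-1 (color j stands for the variable x_(j+1)). *)
Definition proper n m (sigma : 'S_n) (c : {ffun 'I_n -> 'I_m}) : bool :=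
  all (fun p => c p.1 != c p.2) (path_edges sigma).

Definition asc n m (sigma : 'S_n) (c : {ffun 'I_n -> 'I_m}) : nat :=
  count (fun p => ((val p.1 < val p.2) && (val (c p.1) < val (c p.2)))
               || ((val p.2 < val p.1) && (val (c p.2) < val (c p.1))))%N
        (path_edges sigma).

(* Coefficient of q^k x_1^(alpha_1) ... x_m^(alpha_m) in X(P_n; x, q),
   where m = size alpha: the number of proper colorings with exactly
   alpha_j vertices of color j and with k ascents. *)
Definition cqf_coef n (sigma : 'S_n) (k : nat) (alpha : seq nat) : nat :=
  #|[set c : {ffun 'I_n -> 'I_(size alpha)} |
      [&& proper sigma c, asc sigma c == k &
          [forall j : 'I_(size alpha), #|[set v | c v == j]| == nth 0%N alpha j]]]|.

Definition perm_exps (alpha : seq nat) (s : 'S_(size alpha)) : seq nat :=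
  [seq nth 0%N alpha (s j) | j <- enum 'I_(size alpha)].

Definition cqf_symmetric n (sigma : 'S_n) : Prop :=
  forall (k : nat) (alpha : seq nat) (s : 'S_(size alpha)),
    cqf_coef sigma k (perm_exps s) = cqf_coef sigma k alpha.

(* Main.v *)
Require Import Defs.
From mathcomp Require Import all_boot all_fingroup zify.
Set Implicit Arguments. Unset Strict Implicit. Unset Printing Implicit Defensive.

Fixpoint lrun (W : nat -> bool) (j : nat) : nat :=
  if j is j'.+1 then (if W j' then (lrun W j').+1 else 0) else 0.
Fixpoint rr (W : nat -> bool) (k j : nat) : nat :=
  if k is k'.+1 then (if W j then 0 else (rr W k' j.+1).+1) else 0.
Definition rrun W N j := rr W (N - j) j.
Definition hh W N j := maxn (lrun W j) (rrun W N j).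

Lemma rrun_step (W : nat -> bool) N j : j < N -> rrun W N j = if W j then 0 else (rrun W N j.+1).+1.
Proof.
move=> lt; rewrite /rrun; case E: (N - j) => [|k]; first by move: E; lia.
by rewrite /= subnS E.
Qed.

Lemma rrun_end (W : nat -> bool) N j : N <= j -> rrun W N j = 0.
Proof. by move=> le; rewrite /rrun (_ : N - j = 0) //; lia. Qed.

Lemma lrun_le (W : nat -> bool) j : lrun W j <= j.
Proof. by elim: j => //= j IH; case: (W j) => //. Qed.

Lemma rr_le (W : nat -> bool) k j : rr W k j <= k.
Proof. by elim: k j => //= k IH j; case: (W j) => //; rewrite ltnS IH. Qed.

Lemma hh_le (W : nat -> bool) N j : j <= N -> hh W N j <= N.
Proof.
move=> le; rewrite /hh geq_max (leq_trans (lrun_le W j) le) /rrun.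
by rewrite (leq_trans (rr_le _ _ _)) // leq_subr.
Qed.

Lemma hh_up (W : nat -> bool) N j : j < N -> W j -> hh W N j < hh W N j.+1.
Proof.
move=> lt Wj; rewrite /hh (rrun_step _ lt) Wj /= Wj maxn0.
by rewrite leq_max leqnn.
Qed.

Lemma hh_down (W : nat -> bool) N j : j < N -> ~~ W j -> hh W N j.+1 < hh W N j.
Proof.
move=> lt Wj; rewrite /hh (rrun_step _ lt) (negbTE Wj) /= (negbTE Wj) max0n.
by rewrite leq_max leqnn orbT.
Qed.

Definition gg W N u j :=
  if j == u then 0 else if (j == u.-1) || (j == u.+1) then 1 else (hh W N j).+1.

Definition topf (W : nat -> bool) N (f : nat -> nat) :=
  forall j, j < N -> if W j then f j < f j.+1 else f j.+1 < f j.

Lemma gg_far (W : nat -> bool) N u j : j != u -> j != u.-1 -> j != u.+1 ->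
  gg W N u j = (hh W N j).+1.
Proof. by rewrite /gg => /negbTE -> /negbTE -> /negbTE ->. Qed.
Lemma gg_u (W : nat -> bool) N u : gg W N u u = 0.
Proof. by rewrite /gg eqxx. Qed.
Lemma gg_um (W : nat -> bool) N u : 0 < u -> gg W N u u.-1 = 1.
Proof. by move=> u0; rewrite /gg (_ : u.-1 == u = false) ?eqxx ?orbT //; lia. Qed.
Lemma gg_up (W : nat -> bool) N u : gg W N u u.+1 = 1.
Proof. by rewrite /gg (_ : u.+1 == u = false) ?eqxx ?orbT //; lia. Qed.

Lemma gg_top (W : nat -> bool) N u : 0 < u -> u < N -> ~~ W u.-1 -> W u ->
  (u < 2) || ~~ W (u - 2) -> (N <= u.+1) || W u.+1 -> topf W N (gg W N u).
Proof.
move=> u0 uN Wu1 Wu c1 c2 j jN.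
have Hh := @hh_up W N j jN; have Hd := @hh_down W N j jN.
case: (ltngtP j.+2 u) => [h1|h1|h1].
- rewrite !gg_far; try (apply/eqP; lia).
  by case: (W j) Hh Hd => [H _|_ H]; rewrite ltnS; [apply: H|apply: H].
- case: (ltngtP j u.+1) => [h2|h2|h2].
  + case: (ltngtP j u) => [h3|h3|h3]; try lia.
    * have ej : j = u.-1 by lia. subst j.
      rewrite (negbTE Wu1) (_ : u.-1.+1 = u); last by lia.
      by rewrite gg_u gg_um.
    * by subst j; rewrite Wu gg_u gg_up.
  + rewrite !gg_far; try (apply/eqP; lia).
    by case: (W j) Hh Hd => [H _|_ H]; rewrite ltnS; [apply: H|apply: H].
  + have ej : j = u.+1 by lia.
    rewrite ej.
    have WW : W u.+1 by move: c2; case: (W u.+1) => //=; lia.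
    rewrite WW gg_up gg_far; try (apply/eqP; lia).
    rewrite ltnS /hh leq_max; apply/orP; left => /=.
    by rewrite WW.
- have ej : j = u - 2 by lia.
  have Wj : ~~ W j by move: c1; rewrite -ej; case: (W j) => //=; lia.
  rewrite (negbTE Wj) (_ : j.+1 = u.-1); last by lia.
  rewrite gg_um // gg_far; try (apply/eqP; lia).
Qed.

Lemma top_zero (W : nat -> bool) N f j : topf W N f -> j <= N -> f j = 0 -> hh W N j = 0.
Proof.
move=> tf jN fj; rewrite /hh; apply/eqP; rewrite -leqn0 geq_max; apply/andP; split.
- case: j jN fj => //= j jN fj; have := tf j jN.
  by case: (W j) => //; rewrite fj.
- case: (ltnP j N) => [lt|ge]; last by rewrite rrun_end.
  rewrite (rrun_step _ lt); have := tf j lt.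
  by case: (W j) => //; rewrite fj.
Qed.

Lemma count_pos (W : nat -> bool) N u : 0 < u -> u < N -> ~~ W u.-1 -> W u ->
  #|[set j : 'I_N.+1 | hh W N j == 0]|.+1 <= #|[set j : 'I_N.+1 | gg W N u j == 1]|.
Proof.
move=> u0 uN Wu1 Wu.
set A := [set j : 'I_N.+1 | hh W N j == 0].
set B := [set j : 'I_N.+1 | gg W N u j == 1].
pose ou : 'I_N.+1 := inord u; pose om : 'I_N.+1 := inord u.-1; pose op : 'I_N.+1 := inord u.+1.
have vou : (ou : nat) = u by rewrite inordK //; lia.
have vom : (om : nat) = u.-1 by rewrite inordK //; lia.
have vop : (op : nat) = u.+1 by rewrite inordK //; lia.
have hu : hh W N u = 0.
  apply/eqP; rewrite -leqn0 /hh geq_max; apply/andP; split.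
    by move: Wu1; case: (u) u0 => //= u' _ Wu'; rewrite (negbTE Wu').
  by rewrite (rrun_step _ uN) Wu.
have hm : hh W N u.-1 != 0.
  rewrite /hh -lt0n leq_max; apply/orP; right.
  by rewrite (rrun_step _ (_ : u.-1 < N)) ?(negbTE Wu1) //; lia.
have hp : hh W N u.+1 != 0.
  rewrite /hh -lt0n leq_max; apply/orP; left => /=.
  by rewrite Wu.
have ouA : ou \in A by rewrite inE vou hu.
have omA : om \notin A by rewrite inE vom.
have opA : op \notin A by rewrite inE vop.
have sub : (A :\ ou) :|: [set om; op] \subset B.
  apply/subsetP => x; rewrite !inE => /orP[/andP[xu hx]|/orP[/eqP->|/eqP->]].
  - rewrite /gg; case: ifP => [/eqP e|_].
      by move: xu; rewrite (_ : x = ou) ?eqxx //; apply: val_inj; rewrite /= e -vou.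
    by case: ifP => // _; rewrite (eqP hx).
  - by rewrite vom gg_um.
  - by rewrite vop gg_up.
have dis : [disjoint A :\ ou & [set om; op]].
  rewrite -setI_eq0; apply/eqP/setP => x; rewrite !inE.
  apply/negbTE; apply/negP => /andP[/andP[_ xA] /orP[/eqP e|/eqP e]]; subst x.
    by move: omA; rewrite inE xA.
  by move: opA; rewrite inE xA.
have c2 : #|[set om; op]| = 2.
  rewrite cards2; case: eqP => // e; have := congr1 (@nat_of_ord _) e; rewrite vom vop; lia.
have := subset_leq_card sub; rewrite cardsU (_ : _ :&: _ = set0); last first.
  by apply/eqP; rewrite setI_eq0.
rewrite cards0 subn0 c2 (cardsD1 ou A) ouA; lia.
Qed.


Definition lab N (sigma : 'S_N.+1) (j : nat) : 'I_N.+1 := sigma (inord j).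
Definition Wf N (sigma : 'S_N.+1) (j : nat) : bool := (lab sigma j < lab sigma j.+1)%N.

Lemma zip_iota (T : Type) (f : nat -> T) m k :
  zip (map f (iota m k.+1)) (behead (map f (iota m k.+1))) =
  map (fun j => (f j, f j.+1)) (iota m k).
Proof.
elim: k m => [|k IH] m //=.
by rewrite -IH.
Qed.

Lemma labels_eq N (sigma : 'S_N.+1) : path_labels sigma = map (lab sigma) (iota 0 N.+1).
Proof.
rewrite /path_labels -val_enum_ord -map_comp; apply: eq_map => i /=.
by rewrite /lab inord_val.
Qed.

Lemma edges_eq N (sigma : 'S_N.+1) :
  path_edges sigma = map (fun j => (lab sigma j, lab sigma j.+1)) (iota 0 N).
Proof. by rewrite /path_edges labels_eq zip_iota. Qed.

Lemma pattern_eq N (sigma : 'S_N.+1) : ad_pattern sigma = map (Wf sigma) (iota 0 N).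
Proof. by rewrite /ad_pattern edges_eq -map_comp. Qed.

Lemma asc_top N (sigma : 'S_N.+1) m (c : {ffun 'I_N.+1 -> 'I_m}) :
  asc sigma c = N -> topf (Wf sigma) N (fun j => c (lab sigma j)).
Proof.
rewrite /asc edges_eq count_map => e.
have /allP H : all (preim (fun j => (lab sigma j, lab sigma j.+1))
    (fun p : 'I_N.+1 * 'I_N.+1 => ((p.1 < p.2) && (c p.1 < c p.2))
               || ((p.2 < p.1) && (c p.2 < c p.1)))%N) (iota 0 N).
  by rewrite all_count size_iota e.
move=> j jN; have := H j; rewrite mem_iota /= add0n => /(_ jN).
rewrite /Wf /=; case: ltngtP => //=; rewrite ?orbF //.
Qed.

Lemma top_asc N (sigma : 'S_N.+1) m (c : {ffun 'I_N.+1 -> 'I_m}) :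
  topf (Wf sigma) N (fun j => c (lab sigma j)) -> Defs.proper sigma c && (asc sigma c == N).
Proof.
move=> T.
have H : forall j, j \in iota 0 N ->
   ((lab sigma j < lab sigma j.+1) && (c (lab sigma j) < c (lab sigma j.+1))
 || (lab sigma j.+1 < lab sigma j) && (c (lab sigma j.+1) < c (lab sigma j)))%N.
  move=> j; rewrite mem_iota add0n => /= jN; have := T j jN; rewrite /Wf.
  case: ltngtP => /= l h; rewrite ?h ?orbT //.
  have ee : lab sigma j = lab sigma j.+1 by apply: val_inj.
  by move: h; rewrite ee ltnn.
apply/andP; split.
  rewrite /Defs.proper edges_eq all_map; apply/allP => j /H /=.
  by case/orP => /andP[_ h]; rewrite neq_ltn h ?orbT.
rewrite /asc edges_eq count_map.
have A : all (preim (fun j => (lab sigma j, lab sigma j.+1))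
    (fun p : 'I_N.+1 * 'I_N.+1 => ((p.1 < p.2) && (c p.1 < c p.2))
               || ((p.2 < p.1) && (c p.2 < c p.1)))%N) (iota 0 N).
  by apply/allP => j /H.
by move: A; rewrite all_count size_iota.
Qed.

Lemma nth_infix (p t p' : seq bool) k : k < size t ->
  nth false (p ++ t ++ p') (size p + k) = nth false t k.
Proof. by move=> kt; rewrite nth_cat ltnNge leq_addr /= addKn nth_cat kt. Qed.

Lemma hyp_u N (W : nat -> bool) :
  [\/ infix [:: ld; ld; la; la] (map W (iota 0 N)),
      prefix [:: ld; la; la] (map W (iota 0 N))
    | suffix [:: ld; ld; la] (map W (iota 0 N))] ->
  exists u, [/\ 0 < u, u < N, ~~ W u.-1, W u &
     ((u < 2) || ~~ W (u - 2)) && ((N <= u.+1) || W u.+1)].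
Proof.
have nW : forall j, j < N -> nth false (map W (iota 0 N)) j = W j.
  by move=> j jN; rewrite (nth_map 0) ?size_iota // nth_iota.
case.
- move/infixP => [p [p' E]].
  have sz : N = size p + 4 + size p' by rewrite -(size_iota 0 N) -(size_map W) E !size_cat /=; lia.
  have K : forall k, k < 4 -> W (size p + k) = nth false [:: ld; ld; la; la] k.
    by move=> k k4; rewrite -nW; [rewrite E nth_infix|lia].
  exists (size p + 2); split; try lia.
  + by rewrite (_ : (size p + 2).-1 = size p + 1) ?K //; lia.
  + by rewrite K.
  + rewrite (_ : size p + 2 - 2 = size p + 0) ?K //=; last lia.
    by rewrite (_ : (size p + 2).+1 = size p + 3) ?K ?orbT //; lia.
- move/prefixP => [p' E].
  have sz : N = 3 + size p' by rewrite -(size_iota 0 N) -(size_map W) E.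
  have K : forall k, k < 3 -> W k = nth false [:: ld; la; la] k.
    by move=> k k4; rewrite -nW; [rewrite E nth_cat /= k4|lia].
  exists 1; split; try lia.
  + by rewrite K.
  + by rewrite K.
  + by rewrite /= K ?orbT.
- move/suffixP => [p E].
  have sz : N = size p + 3 by rewrite -(size_iota 0 N) -(size_map W) E size_cat.
  have K : forall k, k < 3 -> W (size p + k) = nth false [:: ld; ld; la] k.
    by move=> k k4; rewrite -nW; [rewrite E -[_ ++ _]cats0 -catA nth_infix|lia].
  exists (size p + 2); split; try lia.
  + by rewrite (_ : (size p + 2).-1 = size p + 1) ?K //; lia.
  + by rewrite K.
  + rewrite (_ : size p + 2 - 2 = size p + 0) ?K //=; last lia.
    by rewrite sz (_ : size p + 3 <= (size p + 2).+1) //; lia.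
Qed.

Lemma card_pos N (sigma : 'S_N.+1) (P : pred nat) :
  #|[set v : 'I_N.+1 | P ((sigma^-1)%g v)]| = #|[set j : 'I_N.+1 | P j]|.
Proof.
rewrite -(card_preimset [set j : 'I_N.+1 | P j] (@perm_inj _ (sigma^-1)%g)).
by apply: eq_card => v; rewrite !inE.
Qed.

Theorem proposition4p5 (n : nat) (sigma : 'S_n) :
  [\/ infix [:: ld; ld; la; la] (ad_pattern sigma),
      prefix [:: ld; la; la] (ad_pattern sigma)
    | suffix [:: ld; ld; la] (ad_pattern sigma)] ->
  ~ cqf_symmetric sigma.
Proof.
case: n sigma => [|N] sigma.
  have -> : ad_pattern sigma = [::].
    by rewrite /ad_pattern /path_edges /path_labels (_ : enum 'I_0 = [::]) //; apply/nilP; rewrite /nilp size_enum_ord.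
  by case.
rewrite pattern_eq => /hyp_u [u [u0 uN Wu1 Wu /andP[c1 c2]]] Hsym.
pose W := Wf sigma.
pose g := gg W N u.
pose pos (v : 'I_N.+1) : nat := (sigma^-1)%g v.
pose alpha := [seq #|[set v : 'I_N.+1 | g (pos v) == j]| | j <- iota 0 N.+2].
have sa : size alpha = N.+2 by rewrite size_map size_iota.
have posN : forall v, pos v <= N by move=> v; rewrite -ltnS ltn_ord.
have gb : forall v : 'I_N.+1, g (pos v) < size alpha.
  move=> v; rewrite sa /g /gg; case: ifP => // _; case: ifP => // _.
  by rewrite !ltnS hh_le.
pose c0 : {ffun 'I_N.+1 -> 'I_(size alpha)} := [ffun v => Ordinal (gb v)].
have pos_lab : forall j, j <= N -> pos (lab sigma j) = j.
  by move=> j jN; rewrite /pos /lab permK inordK.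
have lab_pos : forall v, lab sigma (pos v) = v.
  by move=> v; rewrite /pos /lab inord_val permKV.
have top0 : topf W N (fun j => c0 (lab sigma j)).
  have T := @gg_top W N u u0 uN Wu1 Wu c1 c2.
  move=> j jN; rewrite !ffunE /= !pos_lab ?(ltnW jN) //; exact: T.
have pos_alpha : 0 < cqf_coef sigma N alpha.
  apply/card_gt0P; exists c0; rewrite inE.
  have /andP[-> ->] := top_asc top0; rewrite andTb.
  apply/forallP => j; rewrite (nth_map 0) ?size_iota -?sa ?ltn_ord // nth_iota -?sa ?ltn_ord //.
  rewrite add0n; apply/eqP; apply: eq_card => v; rewrite !inE ffunE.
  by apply/eqP/eqP => [<-|e] //; apply: val_inj.
have s0 : 0 < size alpha by rewrite sa.
have s1 : 1 < size alpha by rewrite sa.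
pose o0 : 'I_(size alpha) := Ordinal s0.
pose o1 : 'I_(size alpha) := Ordinal s1.
pose s := tperm o0 o1.
have := Hsym N alpha s.
suff -> : cqf_coef sigma N (perm_exps s) = 0 by move=> e; rewrite -e in pos_alpha.
apply/eqP; rewrite cards_eq0; apply/eqP/setP => c; rewrite !inE.
apply/negP => /and3P[pc /eqP ac /forallP cc].
have sp : 0 < size (perm_exps s) by rewrite size_map size_enum_ord.
have := cc (Ordinal sp).
rewrite (nth_map o0) ?size_enum_ord //.
rewrite (_ : nth o0 (enum 'I_(size alpha)) 0 = o0); last by apply: val_inj; rewrite /= nth_enum_ord.
rewrite tpermL (nth_map 0) ?size_iota // nth_iota // => /eqP E.
have T := asc_top ac.
have sub : [set v | c v == Ordinal sp] \subset [set v : 'I_N.+1 | hh W N (pos v) == 0].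
  apply/subsetP => v; rewrite !inE => /eqP cv.
  apply/eqP; apply: (@top_zero W N (fun j => c (lab sigma j)) (pos v) T (posN v)).
  by rewrite lab_pos cv.
have := subset_leq_card sub; rewrite E.
rewrite (card_pos sigma (fun j => g j == 1)) (card_pos sigma (fun j => hh W N j == 0)).
have := @count_pos W N u u0 uN Wu1 Wu.
rewrite /g; lia.
Qed.
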